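(* Let $H$ be a complex Hilbert space, $V=\mathcal{L}(H)_{sa}$, $r$ a positive integer and $a,b\in\mathfrak{M}(r)$, the set of projections of rank $r$ in $V$. Then $b\in\mathcal{O}_a$ if and only if $a\in\mathcal{O}_b$.
   Context: $V$ is the set of self-adjoint bounded operators on $H$; a projection is $a=a^2=a^*$. For $a\in\mathfrak{M}(r)$, $V_1(a)=aVa$ is a Jordan algebra (product $x\circ y=\frac12(xy+yx)$) with unit $a$, and the antipodal set of $a$ is $\mathcal{O}_a=\{b\in\mathfrak{M}(r): aba\text{ is not invertible in }V_1(a)\}$. *)

(* Defs.v *)
From HB Require Import structures.
From mathcomp Require Import all_boot all_order all_algebra.
From mathcomp Require Import reals complex.
Set Implicit Arguments. Unset Strict Implicit. Unset Printing Implicit Defensive.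
Import Order.TTheory GRing.Theory Num.Theory.
Local Open Scope ring_scope.

Section Hilbert.
Variable R : realType.
Local Notation C := R[i].
Variable H : lmodType C.
Variable ip : H -> H -> C.   (* inner product, linear in the first argument *)

Definition nsq (x : H) : R := complex.Re (ip x x).

Definition is_hilbert_space : Prop :=
  [/\ (forall (k : C) (x y z : H), ip (k *: x + y) z = k * ip x z + ip y z),
      (forall x y : H, ip y x = (ip x y)^*),
      (forall x : H, 0 <= ip x x),
      (forall x : H, ip x x = 0 -> x = 0) &
      (forall u : nat -> H,
         (forall eps : R, 0 < eps -> exists N : nat,
             forall m n : nat, (N <= m)%N -> (N <= n)%N -> nsq (u m - u n) < eps) ->
         exists l : H, forall eps : R, 0 < eps -> exists N : nat,
             forall n : nat, (N <= n)%N -> nsq (u n - l) < eps)].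

Definition bounded_linear (f : H -> H) : Prop :=
  (forall (k : C) (x y : H), f (k *: x + y) = k *: f x + f y) /\
  exists M : R, forall x : H, nsq (f x) <= M * nsq x.

Definition selfadj_bdd (f : H -> H) : Prop :=
  bounded_linear f /\ forall x y : H, ip (f x) y = ip x (f y).

Definition projection (a : H -> H) : Prop := selfadj_bdd a /\ a \o a = a.

Definition range_dim (a : H -> H) (r : nat) : Prop :=
  exists e : 'I_r -> H,
    [/\ (forall i, exists x, e i = a x),
        (forall y, exists c : 'I_r -> C, a y = \sum_(i < r) c i *: e i) &
        (forall c : 'I_r -> C, \sum_(i < r) c i *: e i = 0 -> forall i, c i = 0)].

Definition proj_rank (r : nat) (a : H -> H) : Prop := projection a /\ range_dim a r.

Definition jprod (x y : H -> H) : H -> H :=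
  fun h => 2%:R^-1 *: (x (y h) + y (x h)).

Definition V1 (a : H -> H) (z : H -> H) : Prop :=
  exists X : H -> H, selfadj_bdd X /\ z = a \o X \o a.

(* invertibility in the unital Jordan algebra V_1(a) (unit a):
   x is invertible iff there is y in V_1(a) with x o y = a and x^2 o y = x *)
Definition jinvertible (a x : H -> H) : Prop :=
  exists y : H -> H, [/\ V1 a y, jprod x y = a & jprod (jprod x x) y = x].

Definition antipodal (r : nat) (a b : H -> H) : Prop :=
  proj_rank r b /\ ~ jinvertible a (a \o b \o a).

End Hilbert.

(* Main.v *)
Require Import Defs.
From HB Require Import structures.
From mathcomp Require Import all_boot all_order all_algebra.
From mathcomp Require Import reals complex.
From mathcomp Require Import ring lra.
From Stdlib Require Import ClassicalEpsilon FunctionalExtensionality.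
Set Implicit Arguments. Unset Strict Implicit. Unset Printing Implicit Defensive.
Import Order.TTheory GRing.Theory Num.Theory.
Local Open Scope complex_scope.
Local Open Scope ring_scope.

Lemma conjE (R : realType) (a b : R) : (a +i* b)^* = (a +i* (- b)).
Proof. reflexivity. Qed.
Lemma geE (R : realType) (z : R[i]) : 0 <= z -> z = (complex.Re z)%:C.
Proof. case: z => a b; rewrite lecE /= => /andP[/eqP -> _]. by []. Qed.

Section Main.
Variable R : realType.
Local Notation C := R[i].
Variable H : lmodType C.
Variable ip : H -> H -> C.
Hypothesis ipD : forall (k : C) (x y z : H), ip (k *: x + y) z = k * ip x z + ip y z.
Hypothesis ipC : forall x y : H, ip y x = (ip x y)^*.
Hypothesis ipP : forall x : H, 0 <= ip x x.
Hypothesis ipE : forall x : H, ip x x = 0 -> x = 0.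

Lemma ipDl x y z : ip (x + y) z = ip x z + ip y z.
Proof. by rewrite -[x]scale1r ipD mul1r scale1r. Qed.
Lemma ip0l z : ip 0 z = 0.
Proof. have h := ipDl 0 0 z; rewrite addr0 in h. by apply: (addrI (ip 0 z)); rewrite -h addr0. Qed.
Lemma ipZl k x z : ip (k *: x) z = k * ip x z.
Proof. by rewrite -[k *: x]addr0 ipD ip0l addr0. Qed.
Lemma ip0r z : ip z 0 = 0.
Proof. by rewrite ipC ip0l conjC0. Qed.
Lemma ipDr x y z : ip z (x + y) = ip z x + ip z y.
Proof. by rewrite !(ipC _ z) ipDl rmorphD. Qed.
Lemma ipZr k x z : ip z (k *: x) = k^* * ip z x.
Proof. by rewrite !(ipC _ z) ipZl rmorphM. Qed.
Lemma ipNl x z : ip (- x) z = - ip x z.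
Proof. by rewrite -scaleN1r ipZl mulN1r. Qed.
Lemma ipNr x z : ip z (- x) = - ip z x.
Proof. by rewrite !(ipC _ z) ipNl rmorphN. Qed.
Lemma ip_suml n (F : 'I_n -> H) z : ip (\sum_(i < n) F i) z = \sum_(i < n) ip (F i) z.
Proof. exact: (big_morph (fun x => ip x z) (fun x y => ipDl x y z) (ip0l z)). Qed.

Definition nsq' (x : H) : R := complex.Re (ip x x).
Lemma nsq_ge0 x : 0 <= nsq' x.
Proof. by have := ipP x; rewrite /nsq'; case: (ip x x) => a b; rewrite lecE /= => /andP[]. Qed.
Lemma ip_nsq x : ip x x = (nsq' x)%:C.
Proof. exact: geE. Qed.

Lemma nsqD x y : nsq' (x + y) <= 2%:R * nsq' x + 2%:R * nsq' y.
Proof.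
have e : ip (x + y) (x + y) + ip (x - y) (x - y) = 2%:R * ip x x + 2%:R * ip y y.
  rewrite !ipDl !ipDr !ipNl !ipNr opprK; ring.
move: e; rewrite !ip_nsq => /(congr1 (@complex.Re R)) /= e.
have := nsq_ge0 (x - y); lra.
Qed.

Lemma nsqZ k x : nsq' (k *: x) = complex.Re (k * k^*) * nsq' x.
Proof.
rewrite /nsq' ipZl ipZr ip_nsq; case: k => a b; rewrite conjE /=; ring.
Qed.
Lemma kk_ge0 (k : C) : 0 <= complex.Re (k * k^*).
Proof. case: k => a b; rewrite conjE /=. nra. Qed.

Definition lin (f : H -> H) := forall (k : C) x y, f (k *: x + y) = k *: f x + f y.
Definition bdd (f : H -> H) := exists M : R, forall x, nsq' (f x) <= M * nsq' x.

Section Lin.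
Variable f : H -> H.
Hypothesis lf : lin f.
Lemma lin0 : f 0 = 0.
Proof. have h := lf 1 0 0; rewrite !scale1r addr0 in h. by apply: (addrI (f 0)); rewrite -h addr0. Qed.
Lemma linD x y : f (x + y) = f x + f y.
Proof. by have := lf 1 x y; rewrite !scale1r. Qed.
Lemma linZ k x : f (k *: x) = k *: f x.
Proof. by rewrite -[k *: x]addr0 lf lin0 addr0. Qed.
Lemma linN x : f (- x) = - f x.
Proof. by rewrite -scaleN1r linZ scaleN1r. Qed.
Lemma linsum n (F : 'I_n -> H) : f (\sum_(i < n) F i) = \sum_(i < n) f (F i).
Proof. exact: (big_morph f linD lin0). Qed.
End Lin.

Lemma lin_comp f g : lin f -> lin g -> lin (f \o g).
Proof. by move=> lf lg k x y /=; rewrite lg lf. Qed.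
Lemma lin_id : lin id.
Proof. by []. Qed.
Lemma lin_scale (k : C) f : lin f -> lin (fun h => k *: f h).
Proof. by move=> lf c x y; rewrite lf scalerDr !scalerA mulrC. Qed.
Lemma lin_sum n (F : 'I_n -> H -> H) : (forall i, lin (F i)) -> lin (fun h => \sum_(i < n) F i h).
Proof.
move=> lF c x y; rewrite scaler_sumr -big_split /=; apply: eq_bigr => i _; exact: lF.
Qed.
Lemma lin_iter f n : lin f -> lin (iter n f).
Proof. move=> lf; elim: n => [|n IH] // c x y /=. by rewrite (IH c x y) lf. Qed.

Lemma bdd_comp f g : bdd f -> bdd g -> bdd (f \o g).
Proof.
move=> [M hM] [N hN]; exists (`|M| * N) => x /=.
apply: (le_trans (hM _)); apply: (le_trans (y := `|M| * nsq' (g x))).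
  by apply: ler_wpM2r; [exact: nsq_ge0 | exact: ler_norm].
by rewrite -mulrA; apply: ler_wpM2l => //; exact: hN.
Qed.
Lemma bdd_id : bdd id.
Proof. by exists 1 => x; rewrite mul1r. Qed.
Lemma bdd_scale (k : C) f : bdd f -> bdd (fun h => k *: f h).
Proof.
move=> [M hM]; exists (complex.Re (k * k^*) * M) => x; rewrite nsqZ -mulrA.
by apply: ler_wpM2l; [exact: kk_ge0 | exact: hM].
Qed.
Lemma bdd_add f g : bdd f -> bdd g -> bdd (fun h => f h + g h).
Proof.
move=> [M hM] [N hN]; exists (2%:R * M + 2%:R * N) => x.
apply: (le_trans (nsqD _ _)); have := hM x; have := hN x; lra.
Qed.
Lemma bdd_zero : bdd (fun _ => 0).
Proof. exists 0 => x; rewrite mul0r /nsq' ip0l; by []. Qed.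
Lemma bdd_sum n (F : 'I_n -> H -> H) : (forall i, bdd (F i)) -> bdd (fun h => \sum_(i < n) F i h).
Proof.
elim: n F => [|n IH] F bF.
  by have [M hM] := bdd_zero; exists M => x; rewrite big_ord0; apply: hM.
have [M hM] := bdd_add (IH (fun i => F (lift ord0 i)) (fun i => bF _)) (bF ord0).
by exists M => x; rewrite big_ord_recl addrC; apply: hM.
Qed.
Lemma bdd_iter f n : bdd f -> bdd (iter n f).
Proof.
move=> bf; elim: n => [|n IH]; first exact: bdd_id.
have [M hM] := bdd_comp bf IH; by exists M => x; apply: hM.
Qed.

Section Frames.
Variable r : nat.
Definition vec (e : 'I_r -> H) (c : 'rV[C]_r) : H := \sum_(i < r) c 0 i *: e i.
Definition coord (p : H -> H) (e : 'I_r -> H) (y : H) : 'rV[C]_r :=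
  epsilon (inhabits 0) (fun c => p y = vec e c).
Definition Mat (p : H -> H) (f : 'I_r -> H) (L : H -> H) (e : 'I_r -> H) : 'M[C]_r :=
  \matrix_(i, j) (coord p f (L (e i))) 0 j.
Definition spans (p : H -> H) (e : 'I_r -> H) := forall y, exists c : 'rV[C]_r, p y = vec e c.
Definition indep (e : 'I_r -> H) := forall c, vec e c = 0 -> c = 0.

Lemma coordP p e y : spans p e -> p y = vec e (coord p e y).
Proof. move=> sp; rewrite /coord; exact: (epsilon_spec (inhabits 0) (fun c => p y = vec e c) (sp y)). Qed.

Lemma vecD e c d : vec e (c + d) = vec e c + vec e d.
Proof. by rewrite /vec -big_split; apply: eq_bigr => i _; rewrite mxE scalerDl. Qed.
Lemma vecZ e k c : vec e (k *: c) = k *: vec e c.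
Proof. by rewrite /vec scaler_sumr; apply: eq_bigr => i _; rewrite mxE scalerA. Qed.
Lemma vec0 e : vec e 0 = 0.
Proof. by rewrite /vec big1 // => i _; rewrite mxE scale0r. Qed.
Lemma vecN e c : vec e (- c) = - vec e c.
Proof. by rewrite -[- c]scaleN1r vecZ scaleN1r. Qed.
Lemma vec_inj e c d : indep e -> vec e c = vec e d -> c = d.
Proof.
move=> ie h; apply/eqP; rewrite -subr_eq0; apply/eqP; apply: ie.
by rewrite vecD vecN h subrr.
Qed.

Lemma lin_vec L e c : lin L -> L (vec e c) = \sum_(i < r) c 0 i *: L (e i).
Proof. by move=> lL; rewrite /vec linsum //; apply: eq_bigr => i _; rewrite linZ. Qed.

Lemma vecM p f L e c : lin L -> spans p f -> (forall i, p (L (e i)) = L (e i)) ->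
  L (vec e c) = vec f (c *m Mat p f L e).
Proof.
move=> lL sp inL; rewrite lin_vec //.
under eq_bigr => i _ do rewrite -inL (coordP _ sp) /vec scaler_sumr.
rewrite exchange_big /vec; apply: eq_bigr => j _.
rewrite !mxE scaler_suml; apply: eq_bigr => i _; by rewrite scalerA !mxE.
Qed.

Definition pframe (p : H -> H) (e : 'I_r -> H) :=
  [/\ lin p, (forall x, p (p x) = p x), (forall x y, ip (p x) y = ip x (p y)),
      (forall i, p (e i) = e i) & (spans p e /\ indep e)].

Lemma vec_in p e c : lin p -> (forall i, p (e i) = e i) -> p (vec e c) = vec e c.
Proof. by move=> lp pe; rewrite lin_vec //; apply: eq_bigr => i _; rewrite pe. Qed.

Lemma unit_of_inj p e q f L : pframe p e -> pframe q f -> lin L ->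
  (forall i, q (L (e i)) = L (e i)) ->
  (forall h, p h = h -> L h = 0 -> h = 0) -> Mat q f L e \in unitmx.
Proof.
move=> [lp _ _ pe [_ ie]] [_ _ _ _ [sf _]] lL inL inj.
rewrite -row_free_unit; apply/negPn/negP; rewrite -kermx_eq0 => /rowV0Pn [v /sub_kermxP vM vn0].
have h0 : vec e v = 0.
  apply: inj; first exact: vec_in.
  by rewrite (vecM _ lL sf inL) vM vec0.
by move: vn0; rewrite (ie _ h0) eqxx.
Qed.

Lemma swap_inj a ea b eb : pframe a ea -> pframe b eb ->
  (forall h, b h = h -> a h = 0 -> h = 0) ->
  (forall h, a h = h -> b h = 0 -> h = 0).
Proof.
move=> fa fb inj.
have uN := unit_of_inj fb fa (let: And5 la _ _ _ _ := fa in la)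
   (fun i => let: And5 _ aa _ _ _ := fa in aa _) inj.
case: fa => la aa sa ae [spa ia]; case: fb => lb bb sb be [spb ib].
move=> h ah bh.
set c := coord a ea h.
set g := vec eb (c *m invmx (Mat a ea a eb)).
have ag : a g = h.
  rewrite /g (vecM _ la spa (fun i => aa _)) mulmxKV //.
  by rewrite -(coordP _ spa) ah.
have bg : b g = g by apply: vec_in.
apply: ipE.
by rewrite -{1}ag sa ah -bg sb bh ip0r.
Qed.
End Frames.

Lemma half_add (u : H) : 2%:R^-1 *: (u + u) = u.
Proof.
rewrite -mulr2n -(scaler_nat 2 u) scalerA mulVf ?scale1r //.
by rewrite pnatr_eq0.
Qed.

Lemma construct n (a b : H -> H) (ea : 'I_n.+1 -> H) : pframe a ea -> bdd a ->
  lin b -> bdd b -> (forall x y, ip (b x) y = ip x (b y)) -> (forall x, b (b x) = b x) ->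
  (forall h, a h = h -> b h = 0 -> h = 0) ->
  jinvertible ip a (a \o b \o a).
Proof.
move=> fa ba lb bb sb bbb inj.
have fa' := fa; case: fa' => la aa sa ae [spa ia].
set x := a \o b \o a.
have lx : lin x by apply: lin_comp; [apply: lin_comp|].
have bx : bdd x by apply: bdd_comp; [apply: bdd_comp|].
have xin : forall h, a (x h) = x h by move=> h; rewrite /x /= aa.
have xa : forall h, x (a h) = x h by move=> h; rewrite /x /= aa.
have sx : forall h k, ip (x h) k = ip h (x k) by move=> h k; rewrite /x /= sa sb sa.
have inj' : forall h, a h = h -> x h = 0 -> h = 0.
  move=> h ah xh; apply: inj => //; apply: ipE.
  rewrite -(sb (b h) h) bbb -{2}ah -(sa (b h) h).
  have -> : a (b h) = 0 by rewrite -xh /x /= ah.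
  exact: ip0l.
set M := Mat a ea x ea.
have uM : M \in unitmx := unit_of_inj fa fa lx (fun i => xin _) inj'.
have itM : forall i c, iter i x (vec ea c) = vec ea (c *m M ^+ i).
  elim=> [|i IH] c; first by rewrite /= expr0 mulmx1.
  by rewrite /= IH (vecM _ lx spa (fun j => xin _)) exprSr mulmxA.
set p := char_poly M.
have CH : horner_mx M p = 0 := Cayley_Hamilton M.
have hp : horner_mx M p = \sum_(i < n.+2) p`_i *: M ^+ i.
  rewrite -{1}(coefK p) poly_def size_char_poly rmorph_sum; apply: eq_bigr => i _.
  change (horner_mx M (p`_i *: 'X^i) = p`_i *: M ^+ i).
  by rewrite horner_mxZ rmorphXn /= horner_mx_X.
have vsum : forall m (F : 'I_m -> 'rV[C]_n.+1), vec ea (\sum_(i < m) F i) = \sum_(i < m) vec ea (F i).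
  move=> m F; exact: (big_morph (vec ea) (@vecD _ ea) (vec0 ea)).
have comb : forall u, a u = u -> \sum_(i < n.+2) p`_i *: iter i x u = 0.
  move=> u au; rewrite -au (coordP _ spa).
  under eq_bigr => i _ do rewrite itM -vecZ.
  rewrite -vsum -(vec0 ea); congr vec.
  transitivity (coord a ea u *m horner_mx M p); last by rewrite CH mulmx0.
  by rewrite hp mulmx_sumr; apply: eq_bigr => i _; rewrite scalemxAr.
set p0 := p`_0.
have p0n : p0 != 0.
  rewrite /p0 char_poly_det mulf_neq0 //; first by rewrite expf_neq0 // oppr_eq0 oner_eq0.
set Q := fun h => (- p0^-1) *: \sum_(i < n.+1) p`_i.+1 *: iter i x (a h).
have lQ : lin Q.
  apply: lin_scale; apply: lin_sum => i; apply: lin_scale; exact: (lin_comp (lin_iter i lx) la).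
have bQ : bdd Q.
  apply: bdd_scale; apply: bdd_sum => i; apply: bdd_scale; exact: (bdd_comp (bdd_iter i bx) ba).
have itin : forall i h, a (iter i x (a h)) = iter i x (a h).
  by case=> [|i] h /=; [rewrite aa | rewrite xin].
have aQ : forall h, a (Q h) = Q h.
  move=> h; rewrite /Q linZ // linsum //; congr (_ *: _); apply: eq_bigr => i _.
  by rewrite linZ // itin.
have iterC : forall i v, iter i x (x v) = x (iter i x v).
  by elim=> [|i IH] v //=; rewrite IH.
have xQ : forall h, x (Q h) = a h.
  move=> h; rewrite /Q linZ // linsum //.
  have := comb (a h) (aa h); rewrite big_ord_recl /= => e.
  have e2 : \sum_(i < n.+1) x (p`_i.+1 *: iter i x (a h)) = - (p0 *: a h).
    move: e; rewrite /p0 addrC => /eqP; rewrite addr_eq0 => /eqP <-.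
    by apply: eq_bigr => i _; rewrite linZ.
  by rewrite e2 scalerN scaleNr opprK scalerA mulVf // scale1r.
have Qx : forall h, Q (x h) = a h.
  move=> h; rewrite -xQ /Q xin -xa (linZ lx) (linsum lx); congr (_ *: _).
  by apply: eq_bigr => i _; rewrite (linZ lx) iterC.
have sQ : forall h k, ip (Q h) k = ip h (Q k).
  move=> h k; rewrite -aQ sa -{1}(xQ k) -sx xQ sa aQ //.
exists Q; split.
- exists Q; split; last by apply: functional_extensionality => h /=; rewrite /Q aa -/(Q h) aQ.
  by split; [split|].
- apply: functional_extensionality => h; rewrite /jprod xQ Qx; exact: half_add.
- apply: functional_extensionality => h; rewrite /jprod.
  have jxx : forall v, 2%:R^-1 *: (x (x v) + x (x v)) = x (x v) by move=> v; exact: half_add.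
  rewrite !jxx xQ xa.
  have -> : Q (x (x h)) = x h by rewrite Qx xin.
  exact: half_add.
Qed.

Lemma mkframe r a : proj_rank ip r a ->
  exists e : 'I_r -> H, pframe a e /\ bdd a.
Proof.
move=> [[[[la ba] sa] aa] [e [ein esp eind]]].
have aa' : forall x, a (a x) = a x by move=> x; exact: (equal_f aa x).
exists e; split=> //; split=> //.
- by move=> i; have [z ->] := ein i; rewrite aa'.
- split.
  + move=> y; have [c hc] := esp y; exists (\row_i c i); rewrite hc /vec.
    by apply: eq_bigr => i _; rewrite mxE.
  + move=> c hc; apply/matrixP => i j; rewrite (ord1 i) mxE.
    by apply: (eind (fun j => c 0 j)).
Qed.

Lemma jinv_inj a b : lin a -> lin b -> (forall x, b (b x) = b x) ->
  (forall x y, ip (a x) y = ip x (a y)) -> (forall x y, ip (b x) y = ip x (b y)) ->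
  jinvertible ip b (b \o a \o b) -> forall h, b h = h -> a h = 0 -> h = 0.
Proof.
move=> la lb bb sa sb [y [[X [[[lX _] _] ->]] j1 _]] h bh ah.
rewrite /jprod /= in j1.
have := equal_f j1 h; rewrite /= !bb bh ah (lin0 lb) (lin0 lX) (lin0 lb) addr0 => e.
apply: ipE; rewrite -{1}e ipZl sb sa sb bh ah (lin0 lb) ip0r.
by rewrite mulr0.
Qed.

Lemma dir n a b (ea eb : 'I_n.+1 -> H) : pframe a ea -> pframe b eb -> bdd a -> bdd b ->
  jinvertible ip b (b \o a \o b) -> jinvertible ip a (a \o b \o a).
Proof.
move=> fa fb ba bb jb.
have fa' := fa; have fb' := fb.
case: fa' => la aa sa ae [spa ia]; case: fb' => lb bbb sb be [spb ib].
have i1 := jinv_inj la lb bbb sa sb jb.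
have i2 := swap_inj fa fb i1.
exact: construct fa ba lb bb sb bbb i2.
Qed.

Lemma main_sec r (hr : (0 < r)%N) a b : proj_rank ip r a -> proj_rank ip r b ->
  antipodal ip r a b <-> antipodal ip r b a.
Proof.
move=> ha hb.
case: r hr ha hb => // n _ ha hb.
have [ea [fa ba]] := mkframe ha; have [eb [fb bb]] := mkframe hb.
split=> -[_ nj]; split=> // j; apply: nj.
- exact: (dir fa fb ba bb j).
- exact: (dir fb fa bb ba j).
Qed.
End Main.

Theorem corollary4p9 (R : realType) (H : lmodType R[i]) (ip : H -> H -> R[i])
  (hH : is_hilbert_space ip) (r : nat) (hr : (0 < r)%N) (a b : H -> H)
  (ha : proj_rank ip r a) (hb : proj_rank ip r b) :
  antipodal ip r a b <-> antipodal ip r b a.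
Proof.
case: hH => ipD ipC ipP ipE _.
exact: main_sec.
Qed.
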